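(* Let $\alpha,\beta$ be nonzero algebraic integers with $\alpha/\beta$ not a root of unity, and let $L_n=L_n(\alpha,\beta)=\frac{\alpha^n-\beta^n}{\alpha-\beta}$. Suppose that for some integer $m\ge2$, $L_n^m\in\mathbb Z$ for all $n\ge0$. Then there exists an algebraic integer $\gamma$ with $\gamma^m\in\mathbb Q$ and $\alpha=\gamma\alpha'$, $\beta=\gamma\beta'$, such that either $L_n(\alpha',\beta')\in\mathbb Q$ for all $n$, or $m$ is even and there are coprime integers $r,s$ with $\alpha'=\sqrt r+\sqrt s$, $\beta'=\sqrt r-\sqrt s$, so that $L_n(\alpha',\beta')^2\in\mathbb Q$ for all $n$.
   Context: $L_n(x,y)=(x^n-y^n)/(x-y)$. *)

(* Defs.v *)
From HB Require Import structures.
From mathcomp Require Import all_boot all_order all_algebra all_field.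
Set Implicit Arguments. Unset Strict Implicit. Unset Printing Implicit Defensive.
Import Order.TTheory GRing.Theory Num.Theory.
Local Open Scope ring_scope.

Definition lucasL (n : nat) (x y : algC) : algC := (x ^+ n - y ^+ n) / (x - y).

(* Main.v *)
Require Import Defs.
From HB Require Import structures.
From mathcomp Require Import all_boot all_order all_algebra all_field.
From mathcomp Require Import ring zify.
Import Order.TTheory GRing.Theory Num.Theory.
Local Open Scope ring_scope.

Lemma pow_inj (r : algC) a b : r != 0 -> (forall k, (0 < k)%N -> r ^+ k != 1) ->
  r ^+ a = r ^+ b -> a = b.
Proof.
move=> r0 Hr.
wlog ab : a b / (a <= b)%N.
  by move=> W; case/orP: (leq_total a b) => [/W //|/W W' /esym /W'].
move=> E; apply/eqP; rewrite eqn_leq ab /= leqNgt; apply/negP => ba.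
have k0 : (0 < b - a)%N by rewrite subn_gt0.
move: E; rewrite -(subnKC ab) exprD -{1}[r ^+ a]mulr1 => /mulfI.
rewrite expf_neq0 // => /(_ isT) /esym /eqP; by rewrite (negbTE (Hr _ k0)).
Qed.

Fixpoint Ppair (n : nat) : {poly rat} * {poly rat} :=
  if n is n'.+1 then let pr := Ppair n' in (pr.2, pr.2 - 'X * pr.1) else (0, 1).
Definition Pp n := (Ppair n).1.
Lemma Pp_rec n : Pp n.+2 = Pp n.+1 - 'X * Pp n.
Proof. by []. Qed.
Lemma Pp0 : Pp 0 = 0. Proof. by []. Qed.
Lemma Pp1 : Pp 1 = 1. Proof. by []. Qed.

Lemma lucas_rec n u w : lucasL n.+2 u w = (u + w) * lucasL n.+1 u w - u * w * lucasL n u w.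
Proof. rewrite /lucasL !exprS; ring. Qed.

Lemma lucas_P n u w : u + w = 1 -> u != w ->
  (map_poly ratr (Pp n)).[u * w] = lucasL n u w.
Proof.
move=> s1 uw.
suff: (map_poly ratr (Pp n)).[u * w] = lucasL n u w /\
      (map_poly ratr (Pp n.+1)).[u * w] = lucasL n.+1 u w by case.
elim: n => [|n [IH1 IH2]].
  rewrite Pp0 Pp1 rmorph0 rmorph1 horner0 hornerC /lucasL !expr0 !expr1 subrr mul0r.
  by rewrite divff // subr_eq0.
split=> //; rewrite Pp_rec lucas_rec s1 mul1r -IH1 -IH2.
by rewrite rmorphB rmorphM /= map_polyX hornerD hornerN hornerM hornerX.
Qed.
Lemma count_split (T : Type) (a b : pred T) (s : seq T) :
  (count (predI a b) s + count (predI a (predC b)) s = count a s)%N.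
Proof.
elim: s => //= x s IH; rewrite -IH.
by case: (a x); case: (b x) => /=; rewrite ?add0n ?addnS ?addSn.
Qed.

Lemma expsum_group (s : seq (algC * algC)) v :
  (forall n, \sum_(p <- s) p.1 * p.2 ^+ n = 0) ->
  \sum_(p <- s | p.2 == v) p.1 = 0.
Proof.
move: (leqnn (count (fun p : algC * algC => p.2 != v) s)).
move: {2}(count _ s) => k.
elim: k s => [|k IH] s Hk H.
  have Hall : all (fun p : algC * algC => p.2 == v) s.
    rewrite all_count -(count_predC (fun p : algC * algC => p.2 == v)).
    by move: Hk; rewrite leqn0 => /eqP Hk; rewrite [X in (_ + X)%N]Hk addn0.
  rewrite -big_filter (all_filterP Hall).
  by rewrite -[RHS](H 0%N); apply: eq_bigr => p _; rewrite expr0 mulr1.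
case Hc: (count (fun p : algC * algC => p.2 != v) s) => [|c].
  by apply: IH => //; rewrite Hc.
have /hasP [p0 p0s p0v] : has (fun p : algC * algC => p.2 != v) s.
  by rewrite has_count Hc.
set w := p0.2.
pose s' := [seq (p.1 * (p.2 - w), p.2) | p <- s & p.2 != w].
have H' : forall n, \sum_(p <- s') p.1 * p.2 ^+ n = 0.
  move=> n; rewrite /s' big_map big_filter.
  transitivity (\sum_(p <- s) p.1 * p.2 ^+ n.+1 - w * \sum_(p <- s) p.1 * p.2 ^+ n);
    last by rewrite !H mulr0 subr0.
  rewrite mulr_sumr -sumrB big_mkcond /=; apply: eq_bigr => [[c0 l]] _ /=.
  case: (l =P w) => [->|_] /=; first by rewrite exprS; ring.
  by rewrite exprS; ring.
have Hcnt : (count (fun p : algC * algC => p.2 != v) s' <= k)%N.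
  rewrite /s' count_map count_filter.
  have E := count_split _ (fun p : algC*algC => p.2 != v) (fun p : algC * algC => p.2 != w) s.
  have : (0 < count (predI (fun p : algC * algC => p.2 != v) (predC (fun p : algC * algC => p.2 != w))) s)%N.
    rewrite -has_count; apply/hasP; by exists p0 => //=; rewrite p0v /= negbK eqxx.
  have -> : count (predI (preim (fun p : algC * algC => ((p.1 * (p.2 - w))%R, p.2)) (fun p : algC * algC => p.2 != v)) (fun p : algC * algC => p.2 != w)) s = count (predI (fun p : algC * algC => p.2 != v) (fun p : algC * algC => p.2 != w)) s by [].
  move: Hk E; rewrite Hc /=.
  lia.
have := IH s' Hcnt H'.
  rewrite /s' big_map big_filter_cond.
  rewrite (eq_bigl (fun p : algC * algC => p.2 == v)); last first.
    move=> p /=; case: (p.2 =P v) => [->|]; rewrite ?andbF ?andbT //.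
    by apply/eqP => Hvw; move: p0v; rewrite -/w -Hvw eqxx.
  rewrite (eq_bigr (fun p => p.1 * (v - w))); last by move=> p /eqP ->.
  rewrite -mulr_suml => Hs; apply/eqP. 
  have : (\sum_(i <- s | i.2 == v) i.1) * (v - w) == 0 by rewrite Hs.
  rewrite mulf_eq0 => /orP [//|].
  by rewrite subr_eq0 => /eqP Hvw; move: p0v; rewrite -/w -Hvw eqxx.
Qed.
Lemma rat_of_roots x : (forall y, root (minCpoly x) y -> y = x \/ y \in Crat) -> x \in Crat.
Proof.
move=> Hy.
have [p [Dp mon_p] minp] := minCpolyP x.
have p0 : p != 0 by rewrite monic_neq0.
have szp : (1 < size p)%N by rewrite -(size_map_poly (ratr : rat -> algC)) -Dp size_minCpoly.
have [r Dr] := closed_field_poly_normal (minCpoly x).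
rewrite (monicP (minCpoly_monic x)) scale1r in Dr.
have small : forall h : {poly rat}, h != 0 -> root (map_poly ratr h) x -> (size p <= size h)%N.
  by move=> h h0; rewrite minp => /dvdp_leq; apply.
case: (boolP (has (fun z => z \in Crat) r)) => [/hasP [z zr /CratP [q Ez]] | nhas]; first subst z.
  have : root (minCpoly x) (ratr q) by rewrite Dr root_prod_XsubC.
  rewrite Dp.
  rewrite fmorph_root => /factor_theorem [h Dh].
  have := root_minCpoly x; rewrite Dp Dh rmorphM /= rootM => /orP [rh|].
    have h0 : h != 0 by apply: contraNneq p0 => h0; rewrite Dh h0 mul0r.
    have := small h h0 rh; rewrite Dh size_mul ?polyXsubC_eq0 // size_XsubC addn2 /=.
    by rewrite ltnn.
  rewrite rmorphB /= map_polyX map_polyC /= root_XsubC => /eqP ->.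
  exact: Crat_rat.
have allx : forall z, z \in r -> z = x.
  move=> z zr; have : root (minCpoly x) z by rewrite Dr root_prod_XsubC.
  case/Hy => // zC; case/hasP: nhas; by exists z.
have Dm : minCpoly x = ('X - x%:P) ^+ size r.
  rewrite Dr (eq_big_seq (fun _ => 'X - x%:P)); last by move=> z /allx ->.
  by rewrite big_const_seq count_predT -[RHS]iter_mulr_1; elim: (size r) => //= n ->.
have szr : size r = (size p).-1.
  have : size (minCpoly x) = (size r).+1 by rewrite Dm size_exp_XsubC.
  by rewrite Dp size_map_poly => ->.
case Er : (size r) => [|[|d]].
- by move: szr; rewrite Er; case: (size p) szp => [|[|]].
- have Ex : (minCpoly x)`_0 = - x by rewrite Dm Er expr1 coefB coefX coefC /= sub0r.
  move: Ex; rewrite Dp coef_map /= => Ex.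
  by rewrite -[x]opprK -Ex rpredN Crat_rat.
- have pd0 : p^`() != 0.
    apply/negP => /eqP pd0; have := congr1 (fun q => q^`()) Dm.
    rewrite Dp deriv_map pd0 rmorph0 deriv_exp derivXsubC mul1r /= => /esym/eqP.
    move=> /eqP H; have := congr1 (fun q => q.[x + 1]) H.
    by rewrite /= hornerMn horner_exp hornerXsubC horner0 addrAC subrr add0r expr1n => /eqP; rewrite mulrn_eq0 oner_eq0 Er.
  have := small _ pd0; rewrite -deriv_map -Dp Dm deriv_exp derivXsubC mul1r.
  rewrite rootE hornerMn horner_exp hornerXsubC subrr expr0n /=.
  rewrite Er /= mul0rn eqxx => /(_ isT).
  by rewrite leqNgt lt_size_deriv.
Qed.
Lemma endgame (ap bp gp dp : algC) (m : nat) : (2 <= m)%N -> ap + bp = 1 -> gp + dp = 1 ->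
  bp != 0 -> dp != 0 -> ap != 0 -> gp != 0 ->
  (forall k, (0 < k)%N -> (ap / bp) ^+ k != 1) ->
  (forall k, (0 < k)%N -> (gp / dp) ^+ k != 1) ->
  (forall j, (j <= m)%N -> exists2 i, (i <= m)%N & dp ^+ m * (gp / dp) ^+ j = bp ^+ m * (ap / bp) ^+ i) ->
  gp * dp = ap * bp.
Proof.
move=> m2 s1 s2 bp0 dp0 ap0 gp0 Hr Ht Hj.
set r := ap / bp; set t := gp / dp.
have r0 : r != 0 by rewrite mulf_neq0 ?invr_eq0.
have t0 : t != 0 by rewrite mulf_neq0 ?invr_eq0.
have Dap : ap = r * bp by rewrite /r divfK.
have Dgp : gp = t * dp by rewrite /t divfK.
have bm0 : bp ^+ m != 0 by rewrite expf_neq0.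
have [b bm E0] := Hj 0%N isT.
have [a _ E1] := Hj 1%N (ltnW m2).
have [c cm Em] := Hj m (leqnn m).
rewrite expr0 mulr1 in E0; rewrite expr1 E0 -mulrA in E1.
move/(mulfI bm0): E1 => E1.
rewrite E0 -mulrA in Em; move/(mulfI bm0): Em => Em.
have rt : (r * t = 1) \/ (t = r).
  case: (ltngtP a b) => ab.
  - left; set k := (b - a)%N.
    have Db : b = (a + k)%N by rewrite /k subnKC // ltnW.
    have E1' : r ^+ k * t = 1.
      apply: (mulfI (expf_neq0 a r0)); rewrite mulr1 mulrA -exprD -Db; exact: E1.
    have Em' : r ^+ b = r ^+ (c + k * m).
      by rewrite exprD -Em exprM -mulrA -exprMn (mulrC t) E1' expr1n mulr1.
    have := @pow_inj r _ _ r0 Hr Em' => Eb.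
    have k1 : k = 1%N by nia.
    by rewrite -E1' k1 expr1.
  - right; set k := (a - b)%N.
    have Da : a = (b + k)%N by rewrite /k subnKC // ltnW.
    have E1' : t = r ^+ k.
      apply: (mulfI (expf_neq0 b r0)); rewrite -exprD -Da; exact: E1.
    have Em' : r ^+ (b + k * m) = r ^+ c by rewrite -Em -/r -/t E1' exprD exprM.
    have := @pow_inj r _ _ r0 Hr Em' => Ec.
    have k1 : k = 1%N by nia.
    by rewrite E1' k1 expr1.
  - have Et : t = 1.
      by apply: (mulfI (expf_neq0 b r0)); rewrite mulr1; move: E1; rewrite ab.
    by case/negP: (Ht 1%N isT); rewrite expr1 -/t Et.
have r1 : r + 1 != 0.
  apply/eqP => H; move: s1; rewrite Dap -{2}[bp]mul1r -mulrDl H mul0r => /eqP.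
  by rewrite eq_sym oner_eq0.
have Hb : bp * (r + 1) = 1 by rewrite mulrDr mulr1 mulrC -Dap s1.
case: rt => [rt|tr].
  have Ddp : dp = ap.
    apply: (mulIf r1).
    have E : r * (t * dp + dp) = r by rewrite -Dgp s2 mulr1.
    have -> : dp * (r + 1) = r by rewrite -[RHS]E !mulrDr [r * (t * dp)]mulrA rt mul1r; ring.
    by rewrite Dap -mulrA Hb mulr1.
  have Dg : gp = bp by rewrite -[gp](addrK dp) s2 Ddp -s1; ring.
  by rewrite Ddp Dg mulrC.
have Ddp : dp = bp.
  apply: (mulIf r1).
  by rewrite Hb mulrDr mulr1 mulrC -tr -Dgp s2.
by rewrite Dgp tr Ddp Dap.
Qed.
Definition cc (u w : algC) (m i : nat) : algC := ((-1) ^+ (m - i) *+ 'C(m, i)) / (u - w) ^+ m.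

Lemma lucas_expand n m (u w : algC) : w != 0 ->
  lucasL n u w ^+ m = \sum_(i < m.+1) cc u w m i * (w ^+ m * (u / w) ^+ i) ^+ n.
Proof.
move=> w0; rewrite /lucasL.
have -> : u ^+ n - w ^+ n = w ^+ n * (-1 + (u / w) ^+ n).
  by rewrite mulrDr mulrN1 expr_div_n mulrC divfK ?expf_neq0 // addrC.
rewrite expr_div_n exprMn exprDn mulr_sumr mulr_suml; apply: eq_bigr => i _.
rewrite /cc !exprMn -!exprM (mulnC n m) (mulnC n i).
ring.
Qed.

Lemma conj_eq (ap bp y : algC) (m : nat) :
  (2 <= m)%N -> ap + bp = 1 -> ap != 0 -> bp != 0 ->
  (forall k, (0 < k)%N -> (ap / bp) ^+ k != 1) ->
  (forall n, lucasL n ap bp ^+ m \in Crat) ->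
  root (minCpoly (ap * bp)) y -> y \notin Crat -> y = ap * bp.
Proof.
move=> m2 s1 ap0 bp0 Hr Hm Hy yQ.
set x := ap * bp.
have apbp : ap != bp.
  apply: contra_neq (Hr 1%N isT) => ->; by rewrite expr1 divff.
have Hpx n : (map_poly ratr (Pp n)).[x] = lucasL n ap bp by apply: lucas_P.
have Hconj n : (map_poly ratr (Pp n)).[y] ^+ m = lucasL n ap bp ^+ m.
  have /CratP [q Dq] := Hm n.
  have [p [Dp _] minp] := minCpolyP x.
  have : root (map_poly ratr (Pp n ^+ m - q%:P)) x.
    by rewrite rmorphB rmorphXn /= map_polyC rootE hornerD hornerN horner_exp hornerC /= Hpx Dq subrr.
  rewrite minp => /dvdpP [h Dh].
  have : root (map_poly ratr (Pp n ^+ m - q%:P)) y by rewrite Dh rmorphM rootM /= -Dp Hy orbT.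
  rewrite rmorphB rmorphXn /= map_polyC rootE hornerD hornerN horner_exp hornerC /= -Dq.
  by rewrite subr_eq0 => /eqP.
have y0 : y != 0 by apply: contraNneq yQ => ->; exact: Crat0.
set s := sqrtC (1 - 4 * y).
have s2 : s ^+ 2 = 1 - 4 * y by rewrite /s sqrtCK.
have sn0 : s != 0.
  apply: contraNneq yQ => s0; move: s2; rewrite s0 expr0n /= => /eqP; rewrite eq_sym subr_eq0 => /eqP E.
  have f0 : (4:algC) != 0 by rewrite pnatr_eq0.
  have -> : y = 4^-1 by apply: (mulfI f0); rewrite -E mulfV.
  by rewrite rpredV rpred_nat.
set gp := (1 + s) / 2; set dp := (1 - s) / 2.
have two0 : (2 : algC) != 0 by rewrite pnatr_eq0.
have g1 : gp + dp = 1 by rewrite /gp /dp; field.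
have Dy : gp * dp = y.
  rewrite /gp /dp.
  have -> : (1 + s) / 2 * ((1 - s) / 2) = (1 - s ^+ 2) / 4 by field.
  by rewrite s2; field.
have gpdp : gp != dp.
  apply: contra_neq sn0 => E; have : gp - dp = s by rewrite /gp /dp; field.
  by rewrite E subrr.
have dp0 : dp != 0 by apply: contraNneq y0 => E; rewrite -Dy E mulr0.
have gp0 : gp != 0 by apply: contraNneq y0 => E; rewrite -Dy E mul0r.
have Hb n : (map_poly ratr (Pp n)).[y] = lucasL n gp dp by rewrite -Dy; apply: lucas_P.
have HA n : (0 < n)%N -> lucasL n ap bp != 0.
  move=> n0; rewrite /lucasL mulf_neq0 // ?invr_eq0 ?subr_eq0 //.
  apply: contra (Hr n n0) => /eqP E.
  by rewrite expr_div_n E divff // expf_neq0.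
have Ht k : (0 < k)%N -> (gp / dp) ^+ k != 1.
  move=> k0; apply/negP => /eqP E.
  have : lucasL k gp dp = 0.
    rewrite /lucasL; move: E; rewrite expr_div_n => /(canRL (divfK (expf_neq0 k dp0))).
    by rewrite mul1r => ->; rewrite subrr mul0r.
  rewrite -Hb => /(congr1 (fun z => z ^+ m)); rewrite Hconj expr0n.
  case: m m2 {Hm Hconj} => // m' _ /= /eqP; rewrite expf_eq0 /= => /eqP H.
  by move: (HA k k0); rewrite H eqxx.
pose lam (i : nat) := bp ^+ m * (ap / bp) ^+ i.
pose mu (i : nat) := dp ^+ m * (gp / dp) ^+ i.
pose sq := [seq (cc ap bp m i, lam i) | i : 'I_m.+1 <- index_enum 'I_m.+1] ++
           [seq (- cc gp dp m j, mu j) | j : 'I_m.+1 <- index_enum 'I_m.+1].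
have H0 n : \sum_(p <- sq) p.1 * p.2 ^+ n = 0.
  rewrite big_cat !big_map /=.
  have := lucas_expand n m ap bp bp0; have := lucas_expand n m gp dp dp0.
  rewrite -Hb Hconj => -> E; rewrite -E.
  by rewrite -big_split big1 // => i _ /=; rewrite mulNr addrN.
have t0 : gp / dp != 0 by rewrite mulf_neq0 ?invr_eq0.
have Hj j : (j <= m)%N -> exists2 i, (i <= m)%N & mu j = lam i.
  move=> jm; have jm' : (j < m.+1)%N by [].
  pose J : 'I_m.+1 := Ordinal jm'.
  have := @expsum_group sq (mu j) H0; rewrite big_cat !big_map /=.
  rewrite [X in _ + X](eq_bigl (fun j0 : 'I_m.+1 => j0 == J)); last first.
    move=> j0 /=; apply/eqP/eqP => [E|->]; last by [].
    apply: ord_inj => /=.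
    apply: (@pow_inj (gp / dp) _ _ t0 Ht); apply: (mulfI (expf_neq0 m dp0)); exact: E.
  rewrite big_pred1_eq.
  case: (pickP (fun i : 'I_m.+1 => lam i == mu j)) => [i /eqP Ei _| none].
    by exists i => //; rewrite -ltnS.
  rewrite big_pred0 // add0r => /eqP; rewrite oppr_eq0 /cc mulf_eq0 invr_eq0 expf_eq0 subr_eq0 (negbTE gpdp) andbF orbF.
  rewrite mulrn_eq0 expf_eq0 oppr_eq0 oner_eq0 andbF orbF.
  by rewrite -[_ == 0%N]negbK -lt0n bin_gt0 jm.
have := @endgame ap bp gp dp m m2 s1 g1 bp0 dp0 ap0 gp0 Hr Ht Hj.
by rewrite Dy.
Qed.

Theorem lemma6 (alpha beta : algC) (m : nat) :
  alpha != 0 -> beta != 0 -> alpha \in Aint -> beta \in Aint ->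
  ~ (exists k : nat, (0 < k)%N /\ (alpha / beta) ^+ k = 1) ->
  (2 <= m)%N ->
  (forall n : nat, lucasL n alpha beta ^+ m \in Num.int) ->
  exists gamma alpha' beta' : algC,
    [/\ gamma \in Aint, gamma ^+ m \in Crat,
        alpha = gamma * alpha', beta = gamma * beta' &
        (forall n : nat, lucasL n alpha' beta' \in Crat) \/
        (~~ odd m /\
         exists (r s : int) (u v : algC),
           [/\ coprimez r s, u ^+ 2 = r%:~R, v ^+ 2 = s%:~R,
           alpha' = u + v /\ beta' = u - v &
           forall n : nat, lucasL n alpha' beta' ^+ 2 \in Crat])].
Proof.
move=> a0 b0 aA bA Hnr m2 HL.
have Hr k : (0 < k)%N -> (alpha / beta) ^+ k != 1.
  by move=> k0; apply/eqP => E; apply: Hnr; exists k.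
have intQ z : z \in Num.int -> z \in Crat by move/intrP => [zz ->]; exact: rpred_int.
have ab : alpha != beta.
  by apply: contra_neq (Hr 1%N isT) => ->; rewrite expr1 divff.
have abs : alpha - beta != 0 by rewrite subr_eq0.
set a := alpha + beta.
have an0 : a != 0.
  apply: contra_neq (Hr 2%N isT) => E.
  have -> : beta = - alpha by apply/eqP; rewrite -addr_eq0 addrC -/a E.
  by rewrite invrN mulrN divff // sqrrN expr1n.
have L2 : lucasL 2 alpha beta = a.
  rewrite /lucasL /a; apply: (mulIf abs); rewrite divfK //; ring.
exists a, (alpha / a), (beta / a); split.
- by rewrite /a rpredD.
- by rewrite -L2; apply: intQ.
- by rewrite [RHS]mulrC divfK.
- by rewrite [RHS]mulrC divfK.
left.
set ap := alpha / a; set bp := beta / a.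
have s1 : ap + bp = 1 by rewrite /ap /bp -mulrDl divff.
have ap0 : ap != 0 by rewrite mulf_neq0 ?invr_eq0.
have bp0 : bp != 0 by rewrite mulf_neq0 ?invr_eq0.
have rr : ap / bp = alpha / beta.
  by rewrite /ap /bp; field; rewrite b0 an0.
have apbp : ap != bp.
  by apply: contra_neq (Hr 1%N isT) => E; rewrite -rr E expr1 divff.
have HLp n : lucasL n ap bp ^+ m \in Crat.
  have -> : lucasL n ap bp = lucasL n alpha beta * a / a ^+ n.
    rewrite /lucasL /ap /bp !expr_div_n; field.
    by rewrite abs expf_neq0.
  have am : a ^+ m \in Crat by rewrite -L2 intQ.
  rewrite exprMn exprMn exprVn -exprM mulnC exprM.
  by apply: rpredM; [apply: rpredM => //; apply: intQ | rewrite rpredV; apply: rpredX].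
have xQ : ap * bp \in Crat.
  apply: rat_of_roots => y Hy.
  case: (boolP (y \in Crat)) => [|yQ]; first by right.
  left; apply: (@conj_eq ap bp y m) => //.
  by move=> k k0; rewrite rr; apply: Hr.
move=> k; have /CratP [q Eq] := xQ.
rewrite -(@lucas_P k ap bp s1 apbp) Eq horner_map.
exact: Crat_rat.
Qed.
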